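(* Let $\hat\Phi\colon\mathcal{X}\to\mathbb{R}^{N_2}$ be a ReLU network with one hidden layer of $N_1$ neurons, $\hat\Phi(x)=\sum_{i=1}^{N_1}\hat w_{2,i}\phi(\langle\hat w_{1,i},x\rangle-\hat b_{1,i})-\hat b_{2,i}$ with nonzero $\hat w_{1,i}$, whose biases are of the form $\hat b_{1,i}=\langle\hat w_{1,i},x_i\rangle$ with $x_i\in\mathcal{X}$ for $i=1,\dots,N_1$. Then for any $\epsilon>0$ there exists a unit sampled network $\Phi$ with one hidden layer such that $\sup_{x\in\mathcal{X}}\|\Phi(x)-\hat\Phi(x)\|<\epsilon$.
   Context: Fix $D\ge1$, Euclidean norm and inner product on $\mathbb{R}^D$, $\phi(t)=\max\{t,0\}$. For $A\subseteq\mathbb{R}^D$ let $d(z,A)=\inf_{a\in A}\|z-a\|$, $\mathrm{Med}(A)=\{z:\exists p\neq q\in A,\ \|p-z\|=\|q-z\|=d(z,A)\}$, reach $\tau_A=\inf_{a\in A}d(a,\mathrm{Med}(A))$. Let $\mathcal{X}'\subset\mathbb{R}^D$ be nonempty compact with $\tau_{\mathcal{X}'}>0$, fix $0<\epsilon_I<\min\{\tau_{\mathcal{X}'},1\}$, and $\mathcal{X}=\{x:d(x,\mathcal{X}')\le\epsilon_I\}$. A unit sampled network with one hidden layer is $\Phi(x)=\sum_i w_{2,i}\phi(\langle w_{1,i},x\rangle-b_{1,i})-b_{2,i}$ where for each hidden neuron there are distinct $x^{(1)}_{0,i},x^{(2)}_{0,i}\in\mathcal{X}$ with $w_{1,i}=\frac{x^{(2)}_{0,i}-x^{(1)}_{0,i}}{\|x^{(2)}_{0,i}-x^{(1)}_{0,i}\|}$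 and $b_{1,i}=\langle w_{1,i},x^{(1)}_{0,i}\rangle$; the output parameters $w_{2,i},b_{2,i}$ are unrestricted. *)

(* Defs.v *)
From HB Require Import structures.
From mathcomp Require Import all_boot all_order all_algebra.
From mathcomp Require Import all_classical all_reals all_analysis.
Set Implicit Arguments. Unset Strict Implicit. Unset Printing Implicit Defensive.
Import Order.TTheory GRing.Theory Num.Theory.
Import numFieldNormedType.Exports.
Local Open Scope classical_set_scope.
Local Open Scope ring_scope.

Section Defs.
Variable R : realType.

Definition dotp (n : nat) (u v : 'rV[R]_n) : R := \sum_(i < n) u 0 i * v 0 i.
Definition enorm (n : nat) (v : 'rV[R]_n) : R := Num.sqrt (dotp v v).

Definition relu (t : R) : R := Num.max t 0.

(* d(z, A) = inf_{a in A} ||z - a||, in the extended reals (inf of empty = +oo) *)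
Definition edist (n : nat) (z : 'rV[R]_n) (A : set 'rV[R]_n) : \bar R :=
  ereal_inf [set (enorm (z - a))%:E | a in A].

Definition medial (n : nat) (A : set 'rV[R]_n) : set 'rV[R]_n :=
  [set z | exists p q, [/\ A p, A q, p <> q,
     (enorm (p - z))%:E = edist z A & (enorm (q - z))%:E = edist z A]].

Definition reach (n : nat) (A : set 'rV[R]_n) : \bar R :=
  ereal_inf [set edist a (medial A) | a in A].

Definition thicken (n : nat) (A : set 'rV[R]_n) (eps : R) : set 'rV[R]_n :=
  [set x | (edist x A <= eps%:E)%E].

Definition net1 (D N M : nat) (w1 : 'I_N -> 'rV[R]_D) (b1 : 'I_N -> R)
  (w2 b2 : 'I_N -> 'rV[R]_M) (x : 'rV[R]_D) : 'rV[R]_M :=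
  \sum_(i < N) (relu (dotp (w1 i) x - b1 i) *: w2 i - b2 i).

Definition unit_sampled_net1 (D M : nat) (X : set 'rV[R]_D)
  (Phi : 'rV[R]_D -> 'rV[R]_M) : Prop :=
  exists (N : nat) (x1 x2 : 'I_N -> 'rV[R]_D) (w2 b2 : 'I_N -> 'rV[R]_M),
    (forall i, [/\ X (x1 i), X (x2 i) & x1 i <> x2 i]) /\
    let w1 := fun i => (enorm (x2 i - x1 i))^-1 *: (x2 i - x1 i) in
    let b1 := fun i => dotp (w1 i) (x1 i) in
    forall x, Phi x = net1 w1 b1 w2 b2 x.

End Defs.

(* Main.v *)
Require Import Defs.
From HB Require Import structures.
From mathcomp Require Import all_boot all_order all_algebra.
From mathcomp Require Import all_classical all_reals all_analysis.
From mathcomp Require Import lra.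
Import Order.TTheory GRing.Theory Num.Theory.
Import numFieldNormedType.Exports.
Local Open Scope classical_set_scope.
Local Open Scope ring_scope.

Section H.
Variable R : realType.
Variable n : nat.
Implicit Types u v w : 'rV[R]_n.

Lemma dotpC u v : dotp u v = dotp v u.
Proof. by apply: eq_bigr => i _; rewrite mulrC. Qed.

Lemma dotpDr u v w : dotp u (v + w) = dotp u v + dotp u w.
Proof. by rewrite /dotp -big_split; apply: eq_bigr => i _; rewrite !mxE mulrDr. Qed.

Lemma dotpZr k u v : dotp u (k *: v) = k * dotp u v.
Proof. by rewrite /dotp mulr_sumr; apply: eq_bigr => i _; rewrite !mxE mulrCA. Qed.

Lemma dotpNr u v : dotp u (- v) = - dotp u v.
Proof. by rewrite -scaleN1r dotpZr mulN1r. Qed.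

Lemma dotpBr u v w : dotp u (v - w) = dotp u v - dotp u w.
Proof. by rewrite dotpDr dotpNr. Qed.

Lemma dotpZl k u v : dotp (k *: u) v = k * dotp u v.
Proof. by rewrite dotpC dotpZr dotpC. Qed.

Lemma dotpBl u v w : dotp (u - v) w = dotp u w - dotp v w.
Proof. by rewrite dotpC dotpBr !(dotpC w). Qed.

Lemma dotpDl u v w : dotp (u + v) w = dotp u w + dotp v w.
Proof. by rewrite dotpC dotpDr !(dotpC w). Qed.

Lemma dotp_ge0 u : 0 <= dotp u u.
Proof. by apply: sumr_ge0 => i _; rewrite -expr2 sqr_ge0. Qed.

Lemma dotp_eq0 u : dotp u u = 0 -> u = 0.
Proof.
move=> h; apply/rowP => j; rewrite mxE.
have : u 0 j * u 0 j = 0 by apply: (psumr_eq0P _ h) => // i _; rewrite -expr2 sqr_ge0.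
by move/eqP; rewrite mulf_eq0 orbb => /eqP.
Qed.

Lemma enorm_ge0 u : 0 <= enorm u.
Proof. exact: sqrtr_ge0. Qed.

Lemma enorm_sqr u : enorm u ^+ 2 = dotp u u.
Proof. by rewrite sqr_sqrtr // dotp_ge0. Qed.

Lemma enormZ k u : enorm (k *: u) = `|k| * enorm u.
Proof. by rewrite /enorm dotpZl dotpZr mulrA -expr2 sqrtrM ?sqr_ge0 // sqrtr_sqr. Qed.

Lemma enorm_gt0 u : u != 0 -> 0 < enorm u.
Proof.
move=> hu; rewrite lt_neqAle enorm_ge0 andbT; apply/eqP => h.
move/eqP: hu; apply; apply: dotp_eq0; by rewrite -enorm_sqr -h expr0n.
Qed.

Lemma cs_unit u v : dotp u u = 1 -> `|dotp u v| <= enorm v.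
Proof.
move=> hu; set t := dotp u v.
have h : 0 <= dotp (v - t *: u) (v - t *: u) by apply: dotp_ge0.
rewrite dotpBl !dotpBr !dotpZl !dotpZr hu (dotpC v u) -/t in h.
rewrite -(sqrtr_sqr t) /enorm; apply: ler_wsqrtr. lra.
Qed.

Lemma enorm_le_sum u : enorm u <= \sum_j `|u 0 j|.
Proof.
rewrite /enorm -(@ger0_norm _ (\sum_j `|u 0 j|)) ?sumr_ge0 // -sqrtr_sqr.
apply: ler_wsqrtr; rewrite expr2 mulr_suml /dotp; apply: ler_sum => i _.
rewrite mulr_sumr (bigD1 i) //= -normrM ler_wpDr ?real_ler_norm ?realM ?num_real //.
by apply: sumr_ge0 => k _; rewrite -normrM normr_ge0.
Qed.

Lemma relu_lip (a b : R) : `|relu a - relu b| <= `|a - b|.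
Proof.
have h1 := real_ler_norm (num_real (a - b)).
have h2 : -(a - b) <= `|a - b| by rewrite -normrN real_ler_norm ?num_real.
rewrite ler_norml /relu; have [ha|ha] := leP a 0; have [hb|hb] := leP b 0;
 rewrite ?(max_r ha) ?(max_r hb) ?(max_l (ltW ha)) ?(max_l (ltW hb)); apply/andP; split; lra.
Qed.
Lemma relu_scale (k a : R) : 0 <= k -> relu (k * a) = k * relu a.
Proof.
move=> hk; rewrite /relu !maxEle; case: ifP => h1; case: ifP => h2; nra.
Qed.
Lemma pick_c (rho eta c : R) : 0 < rho -> 0 < eta -> eta <= rho -> `|c| < rho + eta ->
  exists c1 c2, [/\ `|c1| <= rho, `|c2| <= rho, c1 < c2 & `|c1 - c| <= 2 * eta].
Proof.
move=> h1 h2 h3; rewrite ltr_norml => /andP [h4 h5].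
have [hc|hc] := leP c (rho - eta).
  have [hc'|hc'] := leP (- rho) c.
    by exists c, (c + eta); split; rewrite ?subrr ?normr0 ?ler_norml; try (apply/andP; split); lra.
  by exists (- rho), (- rho + eta); split; rewrite ?ler_norml; try (apply/andP; split); lra.
by exists (rho - eta), rho; split; rewrite ?ler_norml; try (apply/andP; split); lra.
Qed.

End H.

Theorem lemma3 (R : realType) (D N2 : nat) (hD : (0 < D)%N)
  (X' : set 'rV[R]_D) (hne : X' !=set0) (hcpt : compact X')
  (hreach : (0%:E < reach X')%E)
  (epsI : R) (hepsI0 : 0 < epsI) (hepsI1 : epsI < 1)
  (hepsIr : (epsI%:E < reach X')%E)
  (N1 : nat) (w1h : 'I_N1 -> 'rV[R]_D) (b1h : 'I_N1 -> R)
  (w2h b2h : 'I_N1 -> 'rV[R]_N2) (xs : 'I_N1 -> 'rV[R]_D)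
  (hw1 : forall i, w1h i != 0)
  (hxs : forall i, thicken X' epsI (xs i))
  (hb1 : forall i, b1h i = dotp (w1h i) (xs i))
  (eps : R) (heps : 0 < eps) :
  exists Phi : 'rV[R]_D -> 'rV[R]_N2,
    unit_sampled_net1 (thicken X' epsI) Phi /\
    (ereal_sup [set (enorm (Phi x - net1 w1h b1h w2h b2h x))%:E
                 | x in thicken X' epsI] < eps%:E)%E.
Proof.
pose nn i := enorm (w1h i).
have nn_gt0 i : 0 < nn i by apply: enorm_gt0.
pose u i := (nn i)^-1 *: w1h i.
have uu i : dotp (u i) (u i) = 1.
  rewrite /u dotpZl dotpZr -enorm_sqr -/(nn i) mulrA -expr2 -exprMn mulVf ?expr1n //.
  exact: lt0r_neq0.
have enu i : enorm (u i) = 1 by rewrite /enorm uu sqrtr1.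
have wu i : w1h i = nn i *: u i by rewrite /u scalerA divff ?scale1r // lt0r_neq0.
clearbody u.
pose S := \sum_(j < N2) \sum_(i < N1) nn i * `|w2h i 0 j|.
have S_ge0 : 0 <= S by apply: sumr_ge0 => j _; apply: sumr_ge0 => i _; rewrite mulr_ge0 // ltW.
pose del := eps / (2 * (S + 1)).
have del_gt0 : 0 < del by rewrite /del divr_gt0 // mulr_gt0 //; lra.
have delS : del * S < eps.
  rewrite /del mulrAC ltr_pdivrMr; last by rewrite mulr_gt0 //; lra.
  rewrite -subr_gt0 -mulrBr; apply: mulr_gt0 => //; lra.
pose eta := Num.min (del / 2) epsI.
have eta_gt0 : 0 < eta by rewrite /eta lt_min hepsI0 andbT divr_gt0.
have eta_le : eta <= epsI by rewrite /eta ge_min lexx orbT.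
have eta_le2 : 2 * eta <= del.
  have : eta <= del / 2 by rewrite /eta ge_min lexx.
  lra.
have spec i : exists p : 'rV[R]_D * 'rV[R]_D,
   [/\ thicken X' epsI p.1, thicken X' epsI p.2, p.1 <> p.2,
       (enorm (p.2 - p.1))^-1 *: (p.2 - p.1) = u i &
       `|dotp (u i) p.1 - dotp (u i) (xs i)| <= del].
  have hx := hxs i; rewrite /thicken /= /edist in hx.
  have : (ereal_inf [set (enorm (xs i - a))%:E | a in X'] < (epsI + eta)%:E)%E.
    by apply: (le_lt_trans hx); rewrite lte_fin; lra.
  move=> /ereal_inf_lt [_ [a Xa <-]]; rewrite lte_fin => ha.
  pose c := dotp (u i) (xs i - a).
  have hc : `|c| < epsI + eta by apply: (le_lt_trans (@cs_unit _ _ _ (xs i - a) (uu i))).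
  have [c1 [c2 [hc1 hc2 hc12 hcc]]] := @pick_c _ _ _ c hepsI0 eta_gt0 eta_le hc.
  have thk k : `|k| <= epsI -> thicken X' epsI (a + k *: u i).
    move=> hk; rewrite /thicken /= /edist.
    apply: le_trans (_ : ((enorm (a + k *: u i - a))%:E <= _)%E).
      by apply: ereal_inf_lbound; exists a.
    by rewrite lee_fin addrC addKr enormZ enu mulr1.
  have d21 : a + c2 *: u i - (a + c1 *: u i) = (c2 - c1) *: u i.
    by rewrite opprD addrACA subrr add0r scalerBl.
  exists (a + c1 *: u i, a + c2 *: u i); split => //=; rewrite ?d21.
  - apply: thk hc1.
  - apply: thk hc2.
  - move=> /(congr1 (fun v => v - (a + c1 *: u i))); rewrite d21 subrr => /esym/eqP.
    rewrite scaler_eq0 subr_eq0 => /orP [/eqP h|/eqP h]; first by move: hc12; rewrite h ltxx.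
    have : dotp (u i) (u i) = 0 by rewrite h /dotp big1 // => j _; rewrite mxE mul0r.
    by rewrite uu => /eqP; rewrite oner_eq0.
  - rewrite enormZ enu mulr1 gtr0_norm ?subr_gt0 // scalerA mulVf ?scale1r //.
    by rewrite subr_eq0 gt_eqF.
  - rewrite dotpDr dotpZr uu mulr1.
    have -> : dotp (u i) a + c1 - dotp (u i) (xs i) = c1 - c by rewrite /c dotpBr; lra.
    exact: le_trans hcc eta_le2.
have [f hf] := choice spec.
pose x1 i := (f i).1. pose x2 i := (f i).2.
pose w2 i := nn i *: w2h i.
pose w1 := fun i => (enorm (x2 i - x1 i))^-1 *: (x2 i - x1 i).
pose b1 := fun i => dotp (w1 i) (x1 i).
exists (net1 w1 b1 w2 b2h); split.
  exists N1, x1, x2, w2, b2h; split => //.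
  by move=> i; have [? ? ? _ _] := hf i.
have w1u i : w1 i = u i by rewrite /w1 /x1 /x2; have [_ _ _ -> _] := hf i.
apply: (@le_lt_trans _ _ (del * S)%:E); last by rewrite lte_fin.
apply: ge_ereal_sup => _ [x _ <-]; rewrite lee_fin.
pose d i := nn i * (relu (dotp (u i) x - dotp (u i) (x1 i)) - relu (dotp (u i) x - dotp (u i) (xs i))).
have -> : net1 w1 b1 w2 b2h x - net1 w1h b1h w2h b2h x = \sum_(i < N1) d i *: w2h i.
  rewrite /net1 -sumrB; apply: eq_bigr => i _.
  rewrite /b1 w1u hb1 (wu i) dotpZl dotpZl -mulrBr relu_scale ?ltW //.
  rewrite /d /w2 scalerA mulrBr scalerBl; set A := (_ *: w2h i); set B := (_ *: w2h i).
  by rewrite /A mulrC opprB addrA subrK.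
have hd i : `|d i| <= nn i * del.
  rewrite /d normrM (gtr0_norm (nn_gt0 i)) ler_pM2l //.
  apply: le_trans (relu_lip _ _ _) _.
  have [_ _ _ _ h] := hf i.
  suff -> : forall a b c : R, a - b - (a - c) = - (b - c) by rewrite normrN.
  by move=> *; lra.
apply: le_trans (enorm_le_sum _ _ _) _.
rewrite /S mulr_sumr; apply: ler_sum => j _.
rewrite summxE mulr_sumr; apply: le_trans (ler_norm_sum _ _ _) _; apply: ler_sum => i _.
rewrite mxE normrM mulrA (mulrC del); apply: ler_wpM2r => //.
Qed.
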